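(* Let $q_1,q_2,q_3,q_4$ satisfy $q_1q_2q_3q_4=1$, let $x$ be a variable, let $a\in\{1,2,3,4\}$, and let $\pi$ be a finite solid partition all of whose elements have $a$-th coordinate equal to $1$. Put $$\mathbf R=\sum_{(i_1,i_2,i_3,i_4)\in\pi}x\,q_1^{i_1-1}q_2^{i_2-1}q_3^{i_3-1}q_4^{i_4-1},$$ and define $$\mathcal Z^{\mathrm{D8}}_{\underline 4;4}[\pi,K]=\mathbb I\big[-(1-K^{-1})x^{-1}\mathbf R+\mathbf P_{123}^\vee\mathbf R^\vee\mathbf R\big],\qquad \widetilde{\mathcal Z}^{\mathrm{D6}}_{\bar a}[\pi]=\mathbb I\big[-\mathbf P_a^\vee x^{-1}\mathbf R+\mathbf P_{\bar a}^\vee\mathbf R^\vee\mathbf R\big].$$ Then, specializing $K=q_a$, $$(-1)^{\sigma_4(\pi)}\,\mathcal Z^{\mathrm{D8}}_{\underline 4;4}[\pi,q_a]=\widetilde{\mathcal Z}^{\mathrm{D6}}_{\bar a}[\pi],\qquad \sigma_4(\pi)=\#\{(i,i,i,j)\in\pi:i<j\}.$$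
   Context: A finite solid partition is a finite set $\pi\subset\mathbb Z_{\ge1}^4$ such that if $(i_1,\dots,i_4)\in\pi$ and $1\le i'_b\le i_b$ for all $b$ then $(i'_1,\dots,i'_4)\in\pi$. Characters are finite $\mathbb Z$-combinations of Laurent monomials; after substituting $q_4=(q_1q_2q_3)^{-1}$ the characters above are Laurent polynomials in $q_1,q_2,q_3$ and $K$ ($x$ cancels). $\mathbf X^\vee$ replaces each monomial $m$ by $m^{-1}$. $\mathbf P_a^\vee=1-q_a^{-1}$, and for $S\subseteq\{1,2,3,4\}$, $\mathbf P_S^\vee=\prod_{b\in S}(1-q_b^{-1})$; $\bar a=\{1,2,3,4\}\setminus\{a\}$. A character is movable if its constant-monomial coefficient is zero; for a movable character $\sum_m n_m m$ the index is $\mathbb I[\sum_m n_m m]=\prod_m(1-m^{-1})^{n_m}$. The characters inside both indices are movable, so both sides are well-defined. *)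

(* Defs.v *)
From HB Require Import structures.
From mathcomp Require Import all_boot all_order all_algebra.
From mathcomp Require Import fraction.
From mathcomp Require Import mpoly.
Set Implicit Arguments. Unset Strict Implicit. Unset Printing Implicit Defensive.
Import Order.TTheory GRing.Theory Num.Theory.
Local Open Scope ring_scope.

(* a box (i_1,i_2,i_3,i_4) in Z_{>=1}^4; coordinate b of the paper is
   index b-1 : 'I_4 here *)
Definition box := {ffun 'I_4 -> nat}.

Definition solid_partition (pi : seq box) : Prop :=
  [/\ uniq pi,
      (forall v, v \in pi -> forall b, (1 <= v b)%N) &
      (forall v w : box, v \in pi -> (forall b, (1 <= w b <= v b)%N) ->
         w \in pi)].

Definition sigma4 (pi : seq box) : nat :=
  count (fun v : box =>
     [&& v (inord 0 : 'I_4) == v (inord 1 : 'I_4), v (inord 1 : 'I_4) == v (inord 2 : 'I_4)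
       & (v (inord 2 : 'I_4) < v (inord 3 : 'I_4))%N]) pi.

(* exponent vectors w.r.t. the variables (q1, q2, q3, x, K) = indices 0..4,
   after the substitution q4 = (q1 q2 q3)^{-1} *)
Definition mono := {ffun 'I_5 -> int}.

Definition mono1 : mono := [ffun _ => 0].
Definition mono_mul (m n : mono) : mono := [ffun j => m j + n j].
Definition mono_inv (m : mono) : mono := [ffun j => - m j].
Definition unit_mono (k : nat) : mono := [ffun j : 'I_5 => ((j : nat) == k)%:Z].

Definition qmon (b : 'I_4) : mono :=
  if (b : nat) == 3%N then [ffun j : 'I_5 => if (j < 3)%N then -1 else 0]
  else unit_mono b.
Definition xmon : mono := unit_mono 3.
Definition Kmon : mono := unit_mono 4.

Definition boxmon (v : box) : mono :=
  [ffun j => xmon j + \sum_(b < 4) ((v b)%:Z - 1) * qmon b j].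

Definition chr := seq (mono * int).

Definition chr_mon (m : mono) : chr := [:: (m, 1)].
Definition chr_one : chr := chr_mon mono1.
Definition chr_add (c d : chr) : chr := c ++ d.
Definition chr_opp (c : chr) : chr := [seq (p.1, - p.2) | p <- c].
Definition chr_sub (c d : chr) : chr := chr_add c (chr_opp d).
Definition chr_mul (c d : chr) : chr :=
  [seq (mono_mul p.1 r.1, p.2 * r.2) | p <- c, r <- d].
Definition chr_dual (c : chr) : chr := [seq (mono_inv p.1, p.2) | p <- c].

Definition coef (c : chr) (m : mono) : int := \sum_(p <- c | p.1 == m) p.2.
Definition movable (c : chr) : Prop := coef c mono1 = 0.

Definition Pdual (S : seq 'I_4) : chr :=
  foldr (fun b acc => chr_mul (chr_sub chr_one (chr_mon (mono_inv (qmon b)))) acc)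
        chr_one S.
Definition Pa_dual (a : 'I_4) : chr := Pdual [:: a].
Definition Pabar_dual (a : 'I_4) : chr := Pdual [seq b <- enum 'I_4 | b != a].
Definition P123_dual : chr := Pdual [:: inord 0; inord 1; inord 2].

Definition Rchr (pi : seq box) : chr := [seq (boxmon v, 1) | v <- pi].

Definition RF := {fraction {mpoly int[5]}}.
Definition var (j : 'I_5) : RF := FracField.tofrac ('X_j : {mpoly int[5]}).

Definition ev (k : RF) (m : mono) : RF :=
  (\prod_(j < 4) var (widen_ord (leqnSn 4) j) ^ m (widen_ord (leqnSn 4) j))
  * k ^ m ord_max.

(* I[sum_m n_m m] = prod_m (1 - m^{-1})^{n_m}, each factor evaluated with K := k
   (k = var ord_max : generic K; k = value of q_a : specialization K = q_a) *)
Definition index (k : RF) (c : chr) : RF :=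
  \prod_(m <- undup (map fst c)) (1 - (ev k m)^-1) ^ coef c m.

Definition Kgen : RF := var ord_max.
Definition qval (a : 'I_4) : RF := ev Kgen (qmon a).

Definition chrD8 (pi : seq box) : chr :=
  chr_add (chr_opp (chr_mul (chr_sub chr_one (chr_mon (mono_inv Kmon)))
                            (chr_mul (chr_mon (mono_inv xmon)) (Rchr pi))))
          (chr_mul P123_dual (chr_mul (chr_dual (Rchr pi)) (Rchr pi))).
Definition chrD6 (a : 'I_4) (pi : seq box) : chr :=
  chr_add (chr_opp (chr_mul (Pa_dual a)
                            (chr_mul (chr_mon (mono_inv xmon)) (Rchr pi))))
          (chr_mul (Pabar_dual a) (chr_mul (chr_dual (Rchr pi)) (Rchr pi))).

Definition ZD8 (pi : seq box) (k : RF) : RF := index k (chrD8 pi).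
Definition ZD6 (a : 'I_4) (pi : seq box) : RF := index Kgen (chrD6 a pi).

(* Main.v *)
Require Import Defs.
From HB Require Import structures.
From mathcomp Require Import all_boot all_order all_algebra.
From mathcomp Require Import fraction.
From mathcomp Require Import mpoly.
From mathcomp Require Import ring zify.
Import GRing.Theory.
Local Open Scope ring_scope.

Lemma mono_mulA m n p : mono_mul m (mono_mul n p) = mono_mul (mono_mul m n) p.
Proof. by apply/ffunP => j; rewrite !ffunE addrA. Qed.
Lemma mono_mulC m n : mono_mul m n = mono_mul n m.
Proof. by apply/ffunP => j; rewrite !ffunE addrC. Qed.
Lemma mono_mul1m m : mono_mul mono1 m = m.
Proof. by apply/ffunP => j; rewrite !ffunE add0r. Qed.
Lemma mono_mulm1 m : mono_mul m mono1 = m.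
Proof. by apply/ffunP => j; rewrite !ffunE addr0. Qed.
Lemma mono_invM m n : mono_inv (mono_mul m n) = mono_mul (mono_inv m) (mono_inv n).
Proof. by apply/ffunP => j; rewrite !ffunE opprD. Qed.
Lemma mono_invK m : mono_inv (mono_inv m) = m.
Proof. by apply/ffunP => j; rewrite !ffunE opprK. Qed.
Lemma mono_inv1 : mono_inv mono1 = mono1.
Proof. by apply/ffunP => j; rewrite !ffunE oppr0. Qed.

Lemma var_neq0 j : var j != 0.
Proof.
rewrite /var tofrac_eq0; apply/eqP => /(congr1 (fun p : {mpoly int[5]} => p@_U_(j))).
by rewrite mcoeffX mcoeff0 eqxx.
Qed.

Lemma var_unit j : var j \is a GRing.unit.
Proof. by rewrite unitfE var_neq0. Qed.

Definition evg (m : mono) : RF := \prod_(j < 5) var j ^ m j.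

Lemma evg_unit m : evg m \is a GRing.unit.
Proof. by apply/rpred_prod => j _; apply: unitrXz; apply: var_unit. Qed.

Lemma ev_Kgen m : ev Kgen m = evg m.
Proof.
by rewrite /ev /evg [in RHS]big_ord_recr /=.
Qed.

Lemma evM k m n : k \is a GRing.unit -> ev k (mono_mul m n) = ev k m * ev k n.
Proof.
move=> uk; rewrite /ev !ffunE exprzDr // mulrACA -big_split /=; congr (_ * _).
by apply: eq_bigr => j _; rewrite ffunE exprzDr // var_unit.
Qed.

Lemma ev1 k : ev k mono1 = 1.
Proof. by rewrite /ev big1 ?ffunE ?mul1r // => j _; rewrite ffunE. Qed.

Lemma evV k m : k \is a GRing.unit -> ev k (mono_inv m) = (ev k m)^-1.
Proof.
move=> uk; have u : ev k m \is a GRing.unit.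
  rewrite /ev unitrM unitrXz // andbT; apply/rpred_prod => j _.
  by apply: unitrXz; apply: var_unit.
apply: (@mulIr _ (ev k m)) => //; rewrite mulVr // -evM //.
by rewrite (_ : mono_mul _ _ = mono1) ?ev1 //; apply/ffunP => j; rewrite !ffunE addNr.
Qed.

Lemma evg_eq1 m : evg m = 1 -> m = mono1.
Proof.
pose pos j := if (0 <= m j)%R then `|m j|%N else 0%N.
pose neg j := if (0 <= m j)%R then 0%N else `|m j|%N.
have E j : var j ^ m j = var j ^+ pos j / var j ^+ neg j.
  rewrite /pos /neg; case: (intP (m j)) => [|n|n] /=.
  - by rewrite expr0 invr1 mulr1.
  - by rewrite expr0 invr1 mulr1.
  - by rewrite expr0 mul1r -invr_expz.
rewrite /evg (eq_bigr _ (fun j _ => E j)) big_split /= prodfV.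
have nz : \prod_(j < 5) var j ^+ neg j != 0.
  by apply/prodf_neq0 => j _; rewrite expf_neq0 // var_neq0.
move/(congr1 (fun x => x * \prod_(j < 5) var j ^+ neg j)); rewrite mulfVK // mul1r.
rewrite /var.
rewrite -!(eq_bigr _ (fun j _ => tofracXn _ _)) -!rmorph_prod.
move=> H0.
have H : (\prod_(i < 5) 'X_i ^+ pos i : {mpoly int[5]}) = \prod_(i < 5) 'X_i ^+ neg i.
  by apply/eqP; rewrite -tofrac_eq; apply/eqP; exact: H0.
have XP : forall f : 'I_5 -> nat, (\prod_(i < 5) 'X_i ^+ f i : {mpoly int[5]}) = 'X_[[multinom f i | i < 5]].
  by move=> f; rewrite mpolyXE_id; apply: eq_bigr => i _; rewrite mnmE.
rewrite !XP in H.
have Hm : [multinom neg i | i < 5] = [multinom pos i | i < 5].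
  have := congr1 (fun p : {mpoly int[5]} => p@_[multinom pos i | i < 5]) H.
  rewrite !mcoeffX eqxx. by case: eqP.
apply/ffunP => j; rewrite ffunE.
have := congr1 (fun mm : 'X_{1..5} => mm j) Hm; rewrite !mnmE /pos /neg.
by case: (intP (m j)) => //= n; lia.
Qed.

Definition J (h : mono -> RF) (c : chr) :=
  \prod_(m <- undup (map fst c)) h m ^ coef c m.
Definition E (h : mono -> RF) (c : chr) := \prod_(p <- c) h p.1 ^ p.2.

Lemma coef_cons p c m : coef (p :: c) m = (if p.1 == m then p.2 else 0) + coef c m.
Proof. by rewrite /coef big_cons; case: ifP; rewrite ?add0r. Qed.

Lemma coef_notin c m : m \notin map fst c -> coef c m = 0.
Proof.
move=> H; rewrite /coef big1_seq // => p /andP [/eqP e pc].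
by case/negP: H; rewrite -e; apply/mapP; exists p.
Qed.

Lemma prod_pred1_seq (T : eqType) (r : seq T) (i : T) (F : T -> RF) :
  uniq r -> \prod_(j <- r | j == i) F j = if i \in r then F i else 1.
Proof.
elim: r => [|x r IH] /=; first by rewrite big_nil.
case/andP => xr ur; rewrite big_cons IH // inE.
have [e|ne] := eqVneq x i.
  by subst x; rewrite /= (negbTE xr) mulr1.
by [].
Qed.

Lemma J_E h c : (forall p, p \in c -> h p.1 != 0) -> J h c = E h c.
Proof.
elim: c => [|p c IH] H; first by rewrite /J /E !big_nil.
have IH' : J h c = E h c by apply: IH => q qc; apply: H; rewrite inE qc orbT.
have hp : h p.1 != 0 by apply: H; rewrite inE eqxx.
rewrite /E big_cons -/(E h c) -IH' /J /=.
case: ifPn => pin.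
- have -> : \prod_(m <- undup (map fst c)) h m ^ coef (p :: c) m =
     \prod_(m <- undup (map fst c)) ((if m == p.1 then h p.1 ^ p.2 else 1) * h m ^ coef c m).
    apply: eq_big_seq => m; rewrite mem_undup => /mapP [q qc ->].
    rewrite coef_cons exprzDr; last by rewrite unitfE; apply: H; rewrite inE qc orbT.
    by rewrite eq_sym; case: eqP => [->|] //; rewrite expr0z.
  rewrite big_split /= -big_mkcond prod_pred1_seq ?undup_uniq // mem_undup pin //.
- rewrite big_cons coef_cons eqxx (@coef_notin c p.1 pin) addr0; congr (_ * _).
  apply: eq_big_seq => m; rewrite mem_undup => mc.
  rewrite coef_cons; case: eqP => [e|]; last by rewrite add0r.
  by move: pin; rewrite e => /negP; case.
Qed.

Lemma J_split g c : J g c =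
  g mono1 ^ coef c mono1 * J (fun m => if m == mono1 then 1 else g m) c.
Proof.
rewrite /J.
have -> : \prod_(m <- undup (map fst c)) g m ^ coef c m =
   \prod_(m <- undup (map fst c))
     ((if m == mono1 then g mono1 ^ coef c mono1 else 1) *
      (if m == mono1 then 1 else g m) ^ coef c m).
  by apply: eq_bigr => m _; case: eqP => [->|]; rewrite ?exp1rz ?mulr1 ?mul1r.
rewrite big_split /= -big_mkcond prod_pred1_seq ?undup_uniq // mem_undup.
by case: ifPn => // /coef_notin ->; rewrite expr0z.
Qed.

Lemma E_cat h c d : E h (chr_add c d) = E h c * E h d.
Proof. by rewrite /E /chr_add big_cat. Qed.

Lemma E_opp h c : E h (chr_opp c) = (E h c)^-1.
Proof.
rewrite /E /chr_opp big_map /= -prodfV; apply: eq_bigr => p _.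
by rewrite invr_expz.
Qed.

Lemma E_mul h c d : E h (chr_mul c d) =
  \prod_(p <- c) \prod_(q <- d) h (mono_mul p.1 q.1) ^ (p.2 * q.2).
Proof. by rewrite /E /chr_mul big_allpairs_dep. Qed.

Definition Phi (h : mono -> RF) (l : seq 'I_4) (t : mono) :=
  \prod_(p <- Pdual l) h (mono_mul p.1 t) ^ p.2.

Lemma Phi_nil h t : Phi h [::] t = h t.
Proof. by rewrite /Phi /= big_cons big_nil mulr1 mono_mul1m expr1z. Qed.

Lemma Phi_cons h b l t :
  Phi h (b :: l) t = Phi h l t / Phi h l (mono_mul (mono_inv (qmon b)) t).
Proof.
rewrite /Phi [Pdual _]/= /chr_mul /= !big_cat big_nil !big_map /=.
rewrite GRing.mulr1.
congr (_ * _).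
  by apply: eq_bigr => p _; rewrite mul1r mono_mul1m.
rewrite -prodfV; apply: eq_bigr => p _.
rewrite mulN1r invr_expz; congr (h _ ^ _).
by apply/ffunP => j; rewrite !ffunE; ring.
Qed.

Definition tt (u w : box) := mono_mul (mono_inv (boxmon u)) (boxmon w).

Lemma E_B h l pi :
  E h (chr_mul (Pdual l) (chr_mul (chr_dual (Rchr pi)) (Rchr pi))) =
  \prod_(u <- pi) \prod_(w <- pi) Phi h l (tt u w).
Proof.
rewrite E_mul exchange_big /= /chr_mul big_allpairs_dep /chr_dual /Rchr big_map.
rewrite big_map; apply: eq_bigr => u _; rewrite big_map; apply: eq_bigr => w _.
rewrite /Phi; apply: eq_bigr => p _ /=.
by rewrite !mulr1.
Qed.

Definition bmc (v : box) (j : nat) : int :=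
  match j with
  | 0 => (v (inord 0))%:Z - (v (inord 3))%:Z
  | 1 => (v (inord 1))%:Z - (v (inord 3))%:Z
  | 2 => (v (inord 2))%:Z - (v (inord 3))%:Z
  | 3 => 1
  | _ => 0
  end.

Lemma boxmonE v (j : 'I_5) : boxmon v j = bmc v j.
Proof.
rewrite ffunE !big_ord_recl big_ord0.
have e0 : (ord0 : 'I_4) = inord 0 by apply/val_inj; rewrite /= inordK.
have e1 : (lift ord0 (ord0 : 'I_3) : 'I_4) = inord 1 by apply/val_inj; rewrite /= inordK.
have e2 : (lift ord0 (lift ord0 (ord0 : 'I_2)) : 'I_4) = inord 2 by apply/val_inj; rewrite /= inordK.
have e3 : (lift ord0 (lift ord0 (lift ord0 (ord0 : 'I_1))) : 'I_4) = inord 3 by apply/val_inj; rewrite /= inordK.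
rewrite /qmon /=.
case: j => [[|[|[|[|[|j]]]]] Hj] //=; rewrite !ffunE /= -?e0 -?e1 -?e2 -?e3; lia.
Qed.

Lemma mulE m n j : mono_mul m n j = m j + n j. Proof. by rewrite ffunE. Qed.
Lemma invE m j : mono_inv m j = - m j. Proof. by rewrite ffunE. Qed.

Definition sh (b : 'I_4) (y : mono) := mono_mul (mono_inv (qmon b)) y.

Lemma Phi_bc h b c y :
  Phi h [:: b; c] y = h y / h (sh c y) / (h (sh b y) / h (sh c (sh b y))).
Proof. by rewrite !Phi_cons !Phi_nil. Qed.

Lemma sh_comm x y t : sh x (sh y t) = sh y (sh x t).
Proof. by apply/ffunP => j; rewrite !ffunE; ring. Qed.

Lemma Phi_swap h x y l t : Phi h (x :: y :: l) t = Phi h (y :: x :: l) t.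
Proof.
rewrite !Phi_cons -/(sh x t) -/(sh y t) -/(sh x (sh y t)) -/(sh y (sh x t)) sh_comm.
by rewrite !invfM !invrK; ring.
Qed.

Lemma Phi_congr h b l l' t : (forall t, Phi h l t = Phi h l' t) ->
  Phi h (b :: l) t = Phi h (b :: l') t.
Proof. by move=> e; rewrite !Phi_cons !e. Qed.

Lemma qmon_K b : qmon b ord_max = 0.
Proof. by rewrite /qmon; case: ifP => _; rewrite ffunE //=; case: b => [[|[|[|[|]]]] ?]. Qed.

Lemma Phi_h1h0 (h1 h0 : mono -> RF) l (t : mono) : (forall m : mono, m ord_max = 0 -> h1 m = h0 m) ->
  t ord_max = 0 -> Phi h1 l t = Phi h0 l t.
Proof.
move=> H; elim: l t => [|b l IH] t Ht; first by rewrite !Phi_nil H.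
rewrite !Phi_cons !IH //.
by rewrite !ffunE qmon_K Ht oppr0 addr0.
Qed.

Lemma tt_K u w : tt u w ord_max = 0.
Proof. by rewrite /tt mulE invE !boxmonE /= oppr0 addr0. Qed.

Lemma E_A h L m pi :
  E h (chr_mul L (chr_mul (chr_mon m) (Rchr pi))) =
  \prod_(p <- L) \prod_(v <- pi) h (mono_mul p.1 (mono_mul m (boxmon v))) ^ p.2.
Proof.
rewrite E_mul; apply: eq_bigr => p _.
rewrite /chr_mul /chr_mon /= cats0 /Rchr -map_comp big_map /=.
by apply: eq_bigr => v _; rewrite !mulr1.
Qed.

Definition A8 pi := chr_mul (chr_sub chr_one (chr_mon (mono_inv Kmon)))
                            (chr_mul (chr_mon (mono_inv xmon)) (Rchr pi)).
Definition A6 a pi := chr_mul (Pa_dual a) (chr_mul (chr_mon (mono_inv xmon)) (Rchr pi)).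
Definition SS pi := chr_mul (chr_dual (Rchr pi)) (Rchr pi).

Lemma EA (h1 h0 : mono -> RF) a pi :
  (forall m : mono, m ord_max = 0 -> h1 m = h0 m) ->
  (forall v, v \in pi -> h1 (mono_mul (mono_inv Kmon) (mono_mul (mono_inv xmon) (boxmon v)))
        = h0 (mono_mul (mono_inv (qmon a)) (mono_mul (mono_inv xmon) (boxmon v)))) ->
  E h1 (A8 pi) = E h0 (A6 a pi).
Proof.
move=> H1 H2; rewrite /A8 /A6 !E_A /= !big_cons !big_nil /=.
congr (_ * (_ * _)).
  apply: eq_bigr => v _; rewrite H1 ?mono_mul1m //.
  by rewrite !mulE !invE !boxmonE /= /xmon ffunE /= oppr0 !addr0.
apply: eq_big_seq => v vin; rewrite H2 // mono_mulm1 //.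
Qed.

Definition Psi (rho : mono -> RF) (b c : 'I_4) (z : mono) :=
  rho (sh c (sh b z)) / rho (sh b z) / rho (sh c z) * rho z.

Lemma PW (h0 rho : mono -> RF) (a b c d : 'I_4) t :
  mono_inv (qmon d) = mono_mul (qmon a) (mono_mul (qmon b) (qmon c)) ->
  (forall n, h0 (mono_inv n) = rho n * h0 n) ->
  Phi h0 [:: b; c] (sh d (mono_inv t)) =
  Psi rho b c (sh a t) * Phi h0 [:: b; c] (sh a t).
Proof.
move=> Hq H3.
have Hj : forall j, - qmon d j = qmon a j + qmon b j + qmon c j.
  by move=> j; have := congr1 (fun m : mono => m j) Hq; rewrite mulE invE !mulE addrA.
rewrite !Phi_bc.
have e1 : sh d (mono_inv t) = mono_inv (sh c (sh b (sh a t))).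
  by apply/ffunP => j; rewrite !mulE !invE !mulE !invE; have := Hj j; lia.
have e2 : sh c (sh d (mono_inv t)) = mono_inv (sh b (sh a t)).
  by apply/ffunP => j; rewrite !mulE !invE !mulE !invE; have := Hj j; lia.
have e3 : sh b (sh d (mono_inv t)) = mono_inv (sh c (sh a t)).
  by apply/ffunP => j; rewrite !mulE !invE !mulE !invE; have := Hj j; lia.
have e4 : sh c (sh b (sh d (mono_inv t))) = mono_inv (sh a t).
  by apply/ffunP => j; rewrite !mulE !invE !mulE !invE; have := Hj j; lia.
rewrite e4 e3 e2 e1 !H3 /Psi.
by rewrite !invfM !invrK; ring.
Qed.

Lemma prod2_div (pi : seq box) (F G : box -> box -> RF) :
  \prod_(u <- pi) \prod_(w <- pi) (F u w / G u w) =
  (\prod_(u <- pi) \prod_(w <- pi) F u w) / \prod_(u <- pi) \prod_(w <- pi) G u w.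
Proof.
rewrite -prodfV -big_split /=; apply: eq_bigr => u _.
by rewrite -prodfV -big_split.
Qed.

Lemma prod2_mul (pi : seq box) (F G : box -> box -> RF) :
  \prod_(u <- pi) \prod_(w <- pi) (F u w * G u w) =
  (\prod_(u <- pi) \prod_(w <- pi) F u w) * \prod_(u <- pi) \prod_(w <- pi) G u w.
Proof.
rewrite -big_split /=; apply: eq_bigr => u _.
by rewrite -big_split.
Qed.

Lemma tt_swap u w : tt w u = mono_inv (tt u w).
Proof. by apply/ffunP => j; rewrite /tt ?mulE ?invE ?mulE ?invE; lia. Qed.

Lemma EB_K (h1 h0 : mono -> RF) l pi :
  (forall m : mono, m ord_max = 0 -> h1 m = h0 m) ->
  E h1 (chr_mul (Pdual l) (SS pi)) = E h0 (chr_mul (Pdual l) (SS pi)).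
Proof.
move=> H1; rewrite /SS !E_B; apply: eq_bigr => u _; apply: eq_bigr => w _.
by apply: Phi_h1h0 => //; apply: tt_K.
Qed.

Lemma core (h1 h0 rho : mono -> RF) (a b c d : 'I_4) pi :
  (forall m : mono, m ord_max = 0 -> h1 m = h0 m) ->
  (forall v, v \in pi -> h1 (mono_mul (mono_inv Kmon) (mono_mul (mono_inv xmon) (boxmon v)))
        = h0 (mono_mul (mono_inv (qmon a)) (mono_mul (mono_inv xmon) (boxmon v)))) ->
  (forall n, h0 (mono_inv n) = rho n * h0 n) ->
  (forall h t, Phi h [:: inord 0; inord 1; inord 2] t = Phi h [:: a; b; c] t) ->
  (forall h t, Phi h [seq x <- enum 'I_4 | x != a] t = Phi h [:: d; b; c] t) ->
  mono_inv (qmon d) = mono_mul (qmon a) (mono_mul (qmon b) (qmon c)) ->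
  E h0 (chrD6 a pi) = E h1 (chrD8 pi) /
     \prod_(u <- pi) \prod_(w <- pi) Psi rho b c (sh a (tt u w)).
Proof.
move=> H1 H2 H3 HP8 HP6 Hq.
rewrite /chrD6 /chrD8 -/(A8 pi) -/(A6 a pi) -/(SS pi).
change P123_dual with (Pdual [:: inord 0; inord 1; inord 2]).
rewrite /Pabar_dual E_cat E_cat E_opp E_opp (@EA h1 h0 a pi H1 H2).
rewrite (EB_K _ _ _ _ H1) !E_B.
under eq_bigr => u _ do under eq_bigr => w _ do rewrite HP6 Phi_cons.
under [in RHS]eq_bigr => u _ do under eq_bigr => w _ do rewrite HP8 Phi_cons.
rewrite !prod2_div.
have -> : \prod_(u <- pi) \prod_(w <- pi)
     Phi h0 [:: b; c] (mono_mul (mono_inv (qmon d)) (tt u w)) =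
   (\prod_(u <- pi) \prod_(w <- pi) Psi rho b c (sh a (tt u w))) *
   \prod_(u <- pi) \prod_(w <- pi) Phi h0 [:: b; c] (sh a (tt u w)).
  rewrite exchange_big /= -prod2_mul; apply: eq_bigr => u _; apply: eq_bigr => w _.
  by rewrite tt_swap (@PW h0 rho a b c d _ Hq H3).
by rewrite /sh !invfM; ring.
Qed.

Lemma filt_val (a : 'I_4) :
  map val [seq x <- enum 'I_4 | x != a] = [seq n <- iota 0 4 | n != val a].
Proof.
rewrite -val_enum_ord [in RHS]filter_map; apply: congr1; apply: eq_filter => x /=.
by rewrite -val_eqE.
Qed.

Lemma ordE (k : nat) (H : (k < 4)%N) : Ordinal H = inord k.
Proof. by apply/val_inj; rewrite /= inordK. Qed.

Lemma core3 (h1 h0 : mono -> RF) (a : 'I_4) pi :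
  val a = 3%N ->
  (forall m : mono, m ord_max = 0 -> h1 m = h0 m) ->
  (forall v, v \in pi -> h1 (mono_mul (mono_inv Kmon) (mono_mul (mono_inv xmon) (boxmon v)))
        = h0 (mono_mul (mono_inv (qmon a)) (mono_mul (mono_inv xmon) (boxmon v)))) ->
  E h0 (chrD6 a pi) = E h1 (chrD8 pi).
Proof.
move=> Ha H1 H2.
have L : [seq x <- enum 'I_4 | x != a] = [:: inord 0; inord 1; inord 2].
  apply: (inj_map val_inj); rewrite filt_val Ha /= !inordK //.
rewrite /chrD6 /chrD8 -/(A8 pi) -/(A6 a pi) -/(SS pi).
change P123_dual with (Pdual [:: inord 0; inord 1; inord 2]).
rewrite /Pabar_dual L E_cat E_cat E_opp E_opp (@EA h1 h0 a pi H1 H2).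
by rewrite (EB_K _ _ _ _ H1).
Qed.

Definition nT (a b c : 'I_4) (tb tc : bool) (t : mono) :=
  (if tc then sh c else id) ((if tb then sh b else id) (sh a t)).

Definition dl (a b c : 'I_4) (tb tc : bool) (k : 'I_4) : nat :=
  if k == a then 0%N else if k == b then nat_of_bool (~~ tb)
  else if k == c then nat_of_bool (~~ tc) else 1%N.

Definition wst (a b c : 'I_4) (tb tc : bool) (u : box) : box :=
  [ffun k => (u k - dl a b c tb tc k)%N].

Definition triple (a b c : 'I_4) :=
  [\/ [/\ a = inord 0, b = inord 1 & c = inord 2],
      [/\ a = inord 1, b = inord 0 & c = inord 2] |
      [/\ a = inord 2, b = inord 0 & c = inord 1]].

Lemma qmonE (b : 'I_4) (j : 'I_5) : qmon b j =
  if (b : nat) == 3%N then (if ((j : nat) < 3)%N then -1 else 0) else (((j : nat) == (b : nat))%:Z).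
Proof. by rewrite /qmon; case: ifP => _; rewrite ffunE. Qed.

Ltac keyA E :=
  let E0 := fresh "E0" in let E1 := fresh "E1" in let E2 := fresh "E2" in
  have E0 := congr1 (fun m : mono => m (inord 0)) E;
  have E1 := congr1 (fun m : mono => m (inord 1)) E;
  have E2 := congr1 (fun m : mono => m (inord 2)) E;
  move: E0 E1 E2; rewrite /nT /sh /tt /=;
  rewrite ?mulE ?invE ?mulE ?invE ?mulE ?invE ?mulE ?invE ?mulE ?invE !qmonE !boxmonE /mono1 !ffunE !inordK //=;
  move=> E0 E1 E2; apply/ffunP => -[[|[|[|[|?]]]] ?] //; rewrite ffunE /dl; rewrite ordE; rewrite -?val_eqE /= ?inordK //=; lia.

Ltac keyB :=
  apply/ffunP => -[[|[|[|[|[|?]]]]] ?] //;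
  rewrite /nT /sh /tt /=;
  rewrite ?mulE ?invE ?mulE ?invE ?mulE ?invE ?mulE ?invE ?mulE ?invE !qmonE !boxmonE /mono1 /=; rewrite !ffunE /dl -?val_eqE /= !inordK //=; lia.

Lemma key (a b c : 'I_4) tb tc (u w : box) : triple a b c ->
  (forall k, (1 <= u k)%N) -> (forall k, (1 <= w k)%N) -> u a = 1%N -> w a = 1%N ->
  (nT a b c tb tc (tt u w) == mono1) = (w == wst a b c tb tc u).
Proof.
move=> T Hu Hw Hua Hwa.
have u0 := Hu (inord 0); have u1 := Hu (inord 1); have u2 := Hu (inord 2); have u3 := Hu (inord 3).
have w0 := Hw (inord 0); have w1 := Hw (inord 1); have w2 := Hw (inord 2); have w3 := Hw (inord 3).
case: T => [] [-> -> ->] in Hua Hwa *; case: tb; case: tc;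
  (apply/eqP/eqP => [E|->]; [keyA E | keyB]).
Qed.

Lemma forall4 (P : pred 'I_4) :
  [forall k, P k] = [&& P (inord 0), P (inord 1), P (inord 2) & P (inord 3)].
Proof.
apply/forallP/and4P => [H|[h0 h1 h2 h3]]; first by split; apply: H.
by move=> -[[|[|[|[|?]]]] ?] //; rewrite ordE.
Qed.

Definition scond (v : box) :=
  [&& v (inord 0 : 'I_4) == v (inord 1 : 'I_4), v (inord 1 : 'I_4) == v (inord 2 : 'I_4)
       & (v (inord 2 : 'I_4) < v (inord 3 : 'I_4))%N].

Definition sg (B : bool) : RF := if B then -1 else 1.

Lemma sgn_u a b c (u : box) : triple a b c -> (forall k, (1 <= u k)%N) -> u a = 1%N ->
  sg [forall k, dl a b c true true k < u k]%N * sg [forall k, dl a b c true false k < u k]%N *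
  sg [forall k, dl a b c false true k < u k]%N * sg [forall k, dl a b c false false k < u k]%N
  = sg (scond u).
Proof.
move=> T Hu Hua; rewrite !forall4 /scond /dl.
have u0 := Hu (inord 0); have u1 := Hu (inord 1); have u2 := Hu (inord 2); have u3 := Hu (inord 3).
case: T => [] [-> -> ->] in Hua *; rewrite -!val_eqE /= !inordK //= Hua /=.
all: move: u0 u1 u2 u3; rewrite Hua.
all: set x0 := u (inord 0); set x1 := u (inord 1); set x2 := u (inord 2); set x3 := u (inord 3).
all: move=> u0 u1 u2 u3.
all: have [->|h3] : x3 = 1%N \/ (1 < x3)%N by lia.
all: try have [->|h1] : x1 = 1%N \/ (1 < x1)%N by lia.
all: try have [->|h2] : x2 = 1%N \/ (1 < x2)%N by lia.
all: try have [->|h0] : x0 = 1%N \/ (1 < x0)%N by lia.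
all: rewrite ?h0 ?h1 ?h2 ?h3 ?(gtn_eqF h0) ?(gtn_eqF h1) ?(gtn_eqF h2) ?(ltn_eqF h0) ?(ltn_eqF h1) ?(ltn_eqF h2) /sg /=.
all: rewrite ?u0 ?u1 ?u2 ?u3 /= ?andbF ?andbT /=; try ring.
Qed.

Definition rho0 (n : mono) : RF := (if n == mono1 then 1 else -1) * evg n.

Lemma evgM m n : evg (mono_mul m n) = evg m * evg n.
Proof. by rewrite -!ev_Kgen evM // var_unit. Qed.

Lemma evg_neq0 m : evg m != 0.
Proof. by rewrite -unitfE evg_unit. Qed.

Lemma aux_field (F : fieldType) (s1 s2 s3 s4 Q R Z : F) :
  Q != 0 -> R != 0 -> Z != 0 -> s2^-1 = s2 -> s3^-1 = s3 ->
  (s1 * (R * (Q * Z))) / (s2 * (Q * Z)) / (s3 * (R * Z)) * (s4 * Z) = s1 * s2 * s3 * s4.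
Proof.
move=> hQ hR hZ e2 e3; rewrite !invfM e2 e3.
rewrite [LHS](_ : _ = s1 * s2 * s3 * s4 * ((R / R) * (Q / Q) * (Z / Z) * (Z / Z))); last by ring.
by rewrite !mulfV // !mulr1.
Qed.

Lemma sg_inv B : (sg B)^-1 = sg B.
Proof. by rewrite /sg; case: B; rewrite ?invrN1 ?invr1. Qed.

Lemma Psi_rho0 b c z : Psi rho0 b c z =
  sg (sh c (sh b z) == mono1) * sg (sh b z == mono1) * sg (sh c z == mono1) * sg (z == mono1).
Proof.
rewrite /Psi /rho0 /sh !evgM -!/(sg _).
have ifsg : forall n : mono, (if n == mono1 then 1 else -1) = - sg (n == mono1) :> RF.
  by move=> n; rewrite /sg; case: ifP; rewrite ?opprK.
rewrite !ifsg.
rewrite !mulNr !invrN !mulrN !mulNr !opprK aux_field ?evg_neq0 ?sg_inv //.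
Qed.

Lemma prod_sg (T : Type) (s : seq T) (P : pred T) :
  \prod_(w <- s) sg (P w) = (-1) ^+ count P s.
Proof.
elim: s => [|x s IH]; first by rewrite big_nil.
by rewrite big_cons IH /= exprD /sg; case: (P x); rewrite ?expr1 ?expr0.
Qed.

Lemma sg_nat (B : bool) : (-1) ^+ (nat_of_bool B) = sg B :> RF.
Proof. by case: B. Qed.

Lemma wst_in a b c tb tc pi u : solid_partition pi -> u \in pi ->
  (wst a b c tb tc u \in pi) = [forall k, dl a b c tb tc k < u k]%N.
Proof.
case=> _ Hpos Hcl ui; apply/idP/forallP => [H k|H].
  by have := Hpos _ H k; rewrite /wst ffunE subn_gt0.
apply: (Hcl u) => // k; rewrite /wst ffunE subn_gt0 leq_subr andbT; exact: H.
Qed.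

Lemma cnt a b c tb tc pi u : triple a b c -> solid_partition pi ->
  (forall v, v \in pi -> v a = 1%N) -> u \in pi ->
  count (fun w => nT a b c tb tc (tt u w) == mono1) pi =
  nat_of_bool [forall k, dl a b c tb tc k < u k]%N.
Proof.
move=> T Hsp Ha ui.
have [Hun Hpos _] := Hsp.
rewrite (@eq_in_count _ _ (pred1 (wst a b c tb tc u))); last first.
  by move=> w wi /=; apply: key => //; [apply: Hpos|apply: Hpos|apply: Ha|apply: Ha].
by rewrite count_uniq_mem // (@wst_in a b c tb tc pi u Hsp ui).
Qed.

Lemma sign_all a b c pi : triple a b c -> solid_partition pi ->
  (forall v, v \in pi -> v a = 1%N) ->
  \prod_(u <- pi) \prod_(w <- pi) Psi rho0 b c (sh a (tt u w)) = (-1) ^+ sigma4 pi.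
Proof.
move=> T Hsp Ha.
have [Hun Hpos _] := Hsp.
rewrite /sigma4 -/scond -prod_sg; apply: eq_big_seq => u ui.
under eq_bigr => w _ do rewrite Psi_rho0.
rewrite !big_split /=.
have E : forall tb tc, \prod_(w <- pi) sg (nT a b c tb tc (tt u w) == mono1) =
    sg [forall k, dl a b c tb tc k < u k]%N.
  by move=> tb tc; rewrite prod_sg (@cnt a b c tb tc pi u T Hsp Ha ui) ?sg_nat.
have := E true true; have := E true false; have := E false true; have := E false false.
rewrite /nT /= => -> -> -> ->.
by apply: sgn_u => //; [apply: Hpos|apply: Ha].
Qed.

Definition gk (k : RF) (m : mono) : RF := 1 - (ev k m)^-1.
Definition hk (k : RF) (m : mono) : RF := if m == mono1 then 1 else gk k m.
Definition kX (m : mono) : RF := if m == mono1 then var 0 else 1.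

Lemma index_J (k : RF) (c : chr) : Defs.index k c = J (gk k) c.
Proof. by []. Qed.

Lemma gk1 (k : RF) : gk k mono1 = 0.
Proof. by rewrite /gk ev1 invr1 subrr. Qed.

Lemma evK0 (k : RF) (m : mono) : m ord_max = 0 -> ev k m = evg m.
Proof. by move=> H; rewrite -ev_Kgen /ev H !expr0z. Qed.

Lemma qval_unit a : qval a \is a GRing.unit.
Proof. by rewrite /qval ev_Kgen evg_unit. Qed.

Lemma evKmon (k : RF) : ev k Kmon = k.
Proof.
rewrite /ev big1 ?mul1r; first by rewrite ffunE.
by move=> j _; rewrite ffunE /=; case: j => [[|[|[|[|]]]] ?].
Qed.

Definition X0 (v : box) := mono_mul (mono_inv xmon) (boxmon v).
Definition M1 (v : box) := mono_mul (mono_inv Kmon) (X0 v).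
Definition M2 (a : 'I_4) (v : box) := mono_mul (mono_inv (qmon a)) (X0 v).

Lemma X0_K v : X0 v ord_max = 0.
Proof. by rewrite /X0 mulE invE boxmonE /xmon ffunE /= oppr0 add0r. Qed.

Lemma M1_neq1 v : M1 v != mono1.
Proof.
apply/eqP => /(congr1 (fun m : mono => m ord_max)).
by rewrite /M1 mulE invE X0_K /Kmon /mono1 !ffunE.
Qed.

Lemma M2_neq1 (a : 'I_4) (v : box) : (forall k, (1 <= v k)%N) -> v a = 1%N -> M2 a v != mono1.
Proof.
move=> Hv Hva; have v0 := Hv (inord 0); have v3 := Hv (inord 3).
have v1 := Hv (inord 1); have v2 := Hv (inord 2).
case: a Hva => [[|[|[|[|?]]]] Ha] // Hva; rewrite ordE in Hva.
- apply/eqP => /(congr1 (fun m : mono => m (inord 0))).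
  rewrite /M2 /X0 !mulE !invE boxmonE qmonE /xmon /mono1 !ffunE !inordK //=; lia.
- apply/eqP => /(congr1 (fun m : mono => m (inord 1))).
  rewrite /M2 /X0 !mulE !invE boxmonE qmonE /xmon /mono1 !ffunE !inordK //=; lia.
- apply/eqP => /(congr1 (fun m : mono => m (inord 2))).
  rewrite /M2 /X0 !mulE !invE boxmonE qmonE /xmon /mono1 !ffunE !inordK //=; lia.
- apply/eqP => /(congr1 (fun m : mono => m (inord 0))).
  rewrite /M2 /X0 !mulE !invE boxmonE qmonE /xmon /mono1 !ffunE !inordK //=; lia.
Qed.

Lemma ev_M1 a v : ev (qval a) (M1 v) = evg (M2 a v).
Proof.
rewrite /M1 /M2 evM ?qval_unit // evV ?qval_unit // evKmon evK0 ?X0_K //.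
by rewrite evgM -!ev_Kgen evV ?var_unit.
Qed.

Lemma H1h (a : 'I_4) (m : mono) : m ord_max = 0 -> hk (qval a) m = hk Kgen m.
Proof. by move=> H; rewrite /hk /gk !evK0. Qed.

Lemma H2h (a : 'I_4) (v : box) : (forall k, (1 <= v k)%N) -> v a = 1%N ->
  hk (qval a) (M1 v) = hk Kgen (M2 a v).
Proof.
move=> Hv Hva; rewrite /hk (negbTE (M1_neq1 v)) (negbTE (@M2_neq1 a v Hv Hva)).
by rewrite /gk ev_M1 ev_Kgen.
Qed.

Lemma evg1 : evg mono1 = 1.
Proof. by rewrite -ev_Kgen ev1. Qed.

Lemma inv_eq1 n : (mono_inv n == mono1) = (n == mono1).
Proof.
apply/eqP/eqP => [e|->]; last exact: mono_inv1.
by rewrite -(mono_invK n) e mono_inv1.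
Qed.

Lemma H3h n : hk Kgen (mono_inv n) = rho0 n * hk Kgen n.
Proof.
rewrite /hk /rho0 inv_eq1; case: eqP => [->|_]; first by rewrite evg1 !mul1r.
rewrite /gk !ev_Kgen -!ev_Kgen evV ?var_unit // invrK !ev_Kgen.
have hz := evg_neq0 n.
by rewrite mulN1r mulrBr mulr1 mulNr mulfV // opprK addrC.
Qed.

Lemma E_kX (c : chr) : E kX c = var 0 ^ coef c mono1.
Proof.
elim: c => [|p c IH]; first by rewrite /E /coef !big_nil.
rewrite /E big_cons -/(E kX c) IH coef_cons exprzDr ?var_unit //; congr (_ * _).
by rewrite /kX eq_sym; case: eqP => _; rewrite ?exp1rz ?expr0z.
Qed.

Lemma var0_inj (n m : int) : var 0 ^ n = var 0 ^ m -> n = m.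
Proof.
move=> e.
pose f : mono := [ffun j : 'I_5 => if j == ord0 then n - m else 0].
have : evg f = 1.
  rewrite /evg big_ord_recl big1 ?mulr1; last by move=> j _; rewrite ffunE.
  rewrite ffunE eqxx exprzDr ?var_unit // e -exprzDr ?var_unit //.
  by rewrite addrN expr0z.
move/evg_eq1/(congr1 (fun g : mono => g ord0)); rewrite !ffunE eqxx.
by move/eqP; rewrite subr_eq0 => /eqP.
Qed.

Lemma Pdual_K l p : p \in Pdual l -> p.1 ord_max = 0.
Proof.
elim: l p => [|b l IH] p /=; first by rewrite inE => /eqP -> /=; rewrite ffunE.
case/allpairsPdep => x [y [xi yi ->]] /=.
rewrite mulE (IH _ yi) addr0.
by move: xi; rewrite !inE => /orP [] /eqP -> /=; [rewrite ffunE | rewrite invE qmon_K oppr0].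
Qed.

Lemma memD8 pi p : p \in chrD8 pi ->
  p.1 ord_max = 0 \/ exists2 v, v \in pi & p.1 = M1 v.
Proof.
rewrite /chrD8 /chr_add mem_cat => /orP [].
  case/mapP => q /allpairsPdep [x [y [xi yi ->]]] -> /=.
  case/allpairsPdep: yi => z [r [zi ri ->]] /=.
  move: zi; rewrite inE => /eqP -> /=.
  case/mapP: ri => v vi -> /=.
  move: xi; rewrite !inE => /orP [] /eqP -> /=.
    by left; rewrite mulE (X0_K v) ffunE add0r.
  by right; exists v.
case/allpairsPdep => x [y [xi yi ->]] /=; left.
rewrite mulE (@Pdual_K _ _ xi) add0r.
case/allpairsPdep: yi => z [r [zi ri ->]] /=.
case/mapP: zi => q /mapP [v vi ->] -> /=.
case/mapP: ri => w wi -> /=.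
exact: tt_K.
Qed.

Lemma gk_neq0 (k : RF) m : ev k m != 1 -> gk k m != 0.
Proof. by move=> H; rewrite /gk subr_eq0 eq_sym invr_eq1. Qed.

Lemma J8 (a : 'I_4) pi : solid_partition pi -> (forall v, v \in pi -> v a = 1%N) ->
  J (hk (qval a)) (chrD8 pi) = E (hk (qval a)) (chrD8 pi).
Proof.
move=> [_ Hpos _] Ha; apply: J_E => p pin.
rewrite /hk; case: ifP => [_|ne]; first exact: oner_neq0.
apply: gk_neq0; case: (@memD8 pi p pin) => [K0|[v vi ->]].
  by rewrite evK0 //; apply/eqP => /evg_eq1 /eqP; rewrite ne.
rewrite ev_M1; apply/eqP => /evg_eq1 /eqP.
by rewrite (negbTE (@M2_neq1 a v (Hpos v vi) (Ha v vi))).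
Qed.

Lemma J6 (a : 'I_4) pi : J (hk Kgen) (chrD6 a pi) = E (hk Kgen) (chrD6 a pi).
Proof.
apply: J_E => p _; rewrite /hk; case: ifP => [_|ne]; first exact: oner_neq0.
by apply: gk_neq0; rewrite ev_Kgen; apply/eqP => /evg_eq1 /eqP; rewrite ne.
Qed.

Lemma J_split' (k : RF) c : J (gk k) c = gk k mono1 ^ coef c mono1 * J (hk k) c.
Proof. exact: J_split. Qed.

Lemma Phi_rot h x y z t : Phi h [:: x; y; z] t = Phi h [:: z; x; y] t.
Proof.
rewrite (@Phi_congr h x [:: y; z] [:: z; y]); first exact: Phi_swap.
by move=> s; apply: Phi_swap.
Qed.

Lemma final_gen (a b c d : 'I_4) pi :
  solid_partition pi -> (forall v, v \in pi -> v a = 1%N) ->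
  triple a b c ->
  (forall h t, Phi h [:: inord 0; inord 1; inord 2] t = Phi h [:: a; b; c] t) ->
  (forall h t, Phi h [seq x <- enum 'I_4 | x != a] t = Phi h [:: d; b; c] t) ->
  mono_inv (qmon d) = mono_mul (qmon a) (mono_mul (qmon b) (qmon c)) ->
  (-1) ^+ sigma4 pi * ZD8 pi (qval a) = ZD6 a pi.
Proof.
move=> Hsp Ha T HP8 HP6 Hq.
have [_ Hpos _] := Hsp.
have H2a : forall v, v \in pi ->
   hk (qval a) (mono_mul (mono_inv Kmon) (mono_mul (mono_inv xmon) (boxmon v))) =
   hk Kgen (mono_mul (mono_inv (qmon a)) (mono_mul (mono_inv xmon) (boxmon v))).
  by move=> v vi; apply: (@H2h a v (Hpos v vi) (Ha v vi)).
have Cm := @core (hk (qval a)) (hk Kgen) rho0 a b c d pi (@H1h a) H2a H3h HP8 HP6 Hq.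
have K2 : forall v, v \in pi ->
   kX (mono_mul (mono_inv Kmon) (mono_mul (mono_inv xmon) (boxmon v))) =
   kX (mono_mul (mono_inv (qmon a)) (mono_mul (mono_inv xmon) (boxmon v))).
  move=> v vi; rewrite /kX -/(X0 v) -/(M1 v) -/(M2 a v).
  by rewrite (negbTE (M1_neq1 v)) (negbTE (@M2_neq1 a v (Hpos v vi) (Ha v vi))).
have K3 : forall n, kX (mono_inv n) = (fun _ => 1) n * kX n.
  by move=> n; rewrite /kX inv_eq1 mul1r.
have Ck := @core kX kX (fun _ => 1) a b c d pi (fun _ _ => erefl) K2 K3 HP8 HP6 Hq.
rewrite (@sign_all a b c pi T Hsp Ha) in Cm.
have P1 : \prod_(u <- pi) \prod_(w <- pi) Psi (fun=> 1) b c (sh a (tt u w)) = 1.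
  by rewrite big1 // => u _; rewrite big1 // => w _; rewrite /Psi invr1 !mulr1.
rewrite P1 invr1 mulr1 !E_kX in Ck.
have Ec := var0_inj _ _ Ck.
rewrite /ZD8 /ZD6 !index_J !J_split' !gk1 (@J8 a pi Hsp Ha) J6 Cm Ec.
rewrite -exprVn invrN1 mulrCA; congr (_ * _); exact: mulrC.
Qed.

Lemma final3 (a : 'I_4) pi :
  solid_partition pi -> (forall v, v \in pi -> v a = 1%N) -> val a = 3%N ->
  (-1) ^+ sigma4 pi * ZD8 pi (qval a) = ZD6 a pi.
Proof.
move=> Hsp Ha Ha3.
have [_ Hpos _] := Hsp.
have H2a : forall v, v \in pi ->
   hk (qval a) (mono_mul (mono_inv Kmon) (mono_mul (mono_inv xmon) (boxmon v))) =
   hk Kgen (mono_mul (mono_inv (qmon a)) (mono_mul (mono_inv xmon) (boxmon v))).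
  by move=> v vi; apply: (@H2h a v (Hpos v vi) (Ha v vi)).
have Cm := @core3 (hk (qval a)) (hk Kgen) a pi Ha3 (@H1h a) H2a.
have K2 : forall v, v \in pi ->
   kX (mono_mul (mono_inv Kmon) (mono_mul (mono_inv xmon) (boxmon v))) =
   kX (mono_mul (mono_inv (qmon a)) (mono_mul (mono_inv xmon) (boxmon v))).
  move=> v vi; rewrite /kX -/(X0 v) -/(M1 v) -/(M2 a v).
  by rewrite (negbTE (M1_neq1 v)) (negbTE (@M2_neq1 a v (Hpos v vi) (Ha v vi))).
have Ck := @core3 kX kX a pi Ha3 (fun _ _ => erefl) K2.
rewrite !E_kX in Ck.
have Ec := var0_inj _ _ Ck.
have S0 : sigma4 pi = 0%N.
  rewrite /sigma4 (@eq_in_count _ _ pred0) ?count_pred0 // => v vi /=.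
  have a3 : a = inord 3 by apply/val_inj; rewrite /= inordK ?Ha3.
  by move: (Ha v vi); rewrite a3 => ->; rewrite ltnS leqn0 (gtn_eqF (Hpos v vi _)) !andbF.
rewrite S0 expr0 mul1r.
by rewrite /ZD8 /ZD6 !index_J !J_split' !gk1 (@J8 a pi Hsp Ha) J6 Cm Ec.
Qed.

Lemma filt0 : [seq x <- enum 'I_4 | x != inord 0] = [:: inord 1; inord 2; inord 3].
Proof. by apply: (inj_map val_inj); rewrite filt_val /= !inordK. Qed.
Lemma filt1 : [seq x <- enum 'I_4 | x != inord 1] = [:: inord 0; inord 2; inord 3].
Proof. by apply: (inj_map val_inj); rewrite filt_val /= !inordK. Qed.
Lemma filt2 : [seq x <- enum 'I_4 | x != inord 2] = [:: inord 0; inord 1; inord 3].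
Proof. by apply: (inj_map val_inj); rewrite filt_val /= !inordK. Qed.

Ltac hq_tac :=
  apply/ffunP => -[[|[|[|[|[|?]]]]] ?]; rewrite !mulE invE !qmonE !inordK //=.

Theorem lemma6p14 (a : 'I_4) (pi : seq box) :
  solid_partition pi ->
  (forall v, v \in pi -> v a = 1%N) ->
  (-1) ^+ sigma4 pi * ZD8 pi (qval a) = ZD6 a pi.
Proof.
move=> Hsp.
case: a => [[|[|[|[|?]]]] Hlt] //; rewrite ordE => Ha.
- apply: (@final_gen (inord 0) (inord 1) (inord 2) (inord 3)) => //.
  + by constructor 1.
  + by move=> h t; rewrite filt0 Phi_rot.
  + by hq_tac.
- apply: (@final_gen (inord 1) (inord 0) (inord 2) (inord 3)) => //.
  + by constructor 2.
  + by move=> h t; rewrite Phi_swap.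
  + by move=> h t; rewrite filt1 Phi_rot.
  + by hq_tac.
- apply: (@final_gen (inord 2) (inord 0) (inord 1) (inord 3)) => //.
  + by constructor 3.
  + by move=> h t; rewrite Phi_rot.
  + by move=> h t; rewrite filt2 Phi_rot.
  + by hq_tac.
- by apply: final3 => //; rewrite /= inordK.
Qed.
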